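(* Let $\mathcal H$ be a real Hilbert space. Let $\Psi: \mathcal H \to \mathbb R \cup \{+\infty\}$ be proper, lower-semicontinuous and convex, and let $\Phi: \mathcal H \to \mathbb R$ be convex and continuously differentiable with $L$-Lipschitz continuous gradient; set $\Theta=\Psi+\Phi$ and suppose $\operatorname{argmin}\Theta\neq\emptyset$. Let $\alpha>3$ and $0<s<\frac1L$, and let $(x_k)$ be generated by: given arbitrary $x_0,x_1\in\mathcal H$, for $k\ge1$, $$y_k = x_k + \frac{k-1}{k+\alpha-1}(x_k-x_{k-1}),\qquad x_{k+1} = \operatorname{prox}_{s\Psi}\big(y_k - s\nabla\Phi(y_k)\big).$$ Let $x^*\in\operatorname{argmin}\Theta$, and for $k\ge1$ define $z_k = x_k + \frac{k-1}{\alpha-1}(x_k-x_{k-1})$ and $$\mathcal E(k) = \frac{2s}{\alpha-1}(k+\alpha-2)^2\big(\Theta(x_k)-\Theta(x^* )\big) + (\alpha-1)\|z_k-x^*\|^2.$$ Then $$\sum_{k=1}^\infty k\big(\Theta(x_k)-\Theta(x^* )\big) \le \frac{(\alpha-1)\mathcal E(1)}{2s(\alpha-3)}.$$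
   Context: $\operatorname{prox}_{s\Psi}(z) = \operatorname{argmin}_{u\in\mathcal H}\{\Psi(u) + \frac{1}{2s}\|u-z\|^2\}$ denotes the proximal operator. *)

(* Defs.v *)
From HB Require Import structures.
From mathcomp Require Import all_boot all_order all_algebra.
From mathcomp Require Import all_classical all_reals all_analysis.
Set Implicit Arguments. Unset Strict Implicit. Unset Printing Implicit Defensive.
Import Order.TTheory GRing.Theory Num.Theory.
Import numFieldNormedType.Exports.
Local Open Scope ring_scope.
Local Open Scope classical_set_scope.

(* A real Hilbert space is modelled as a complete normed space V over R
   together with an inner product ip inducing the norm. *)
Definition is_inner_product {R : realType} {V : normedModType R}
  (ip : V -> V -> R) : Prop :=
  [/\ (forall x y, ip x y = ip y x),
      (forall (a : R) x y z, ip (a *: x + y) z = a * ip x z + ip y z)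
    & (forall x, ip x x = `|x| ^+ 2)].

Definition proper_fun {R : realType} {V : Type} (f : V -> \bar R) : Prop :=
  (forall x, f x != -oo%E) /\ (exists x, f x != +oo%E).

Definition convex_ext {R : realType} {V : lmodType R} (f : V -> \bar R) : Prop :=
  forall (x y : V) (t : R), 0 < t < 1 ->
    (f (t *: x + (1 - t) *: y)%R <= t%:E * f x + (1 - t)%:E * f y)%E.

Definition convex_real {R : realType} {V : lmodType R} (f : V -> R) : Prop :=
  forall (x y : V) (t : R), 0 <= t <= 1 ->
    f (t *: x + (1 - t) *: y) <= t * f x + (1 - t) * f y.

Definition is_gradient {R : realType} {V : normedModType R}
  (ip : V -> V -> R) (f : V -> R) (g : V -> V) : Prop :=
  forall x, differentiable f x /\ (forall h, 'd f x h = ip (g x) h).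

Definition is_argmin {R : realType} {V : Type} (f : V -> \bar R) (p : V) : Prop :=
  forall u, (f p <= f u)%E.

Definition is_prox {R : realType} {V : normedModType R}
  (s : R) (Psi : V -> \bar R) (z p : V) : Prop :=
  is_argmin (fun u => (Psi u + ((2 * s)^-1 * `|u - z| ^+ 2)%:E)%E) p.

(* Main.v *)
Require Import Defs.
From HB Require Import structures.
From mathcomp Require Import all_boot all_order all_algebra.
From mathcomp Require Import all_classical all_reals all_analysis.
From mathcomp Require Import lra ring.
Import Order.TTheory GRing.Theory Num.Theory.
Import numFieldNormedType.Exports.
Local Open Scope ring_scope.
Local Open Scope classical_set_scope.

Section IP.
Context {R : realType} {V : normedModType R} (ip : V -> V -> R)
  (Hip : is_inner_product ip).

Lemma ipC x y : ip x y = ip y x. Proof. by case: Hip. Qed.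
Lemma ipN2 x : ip x x = `|x| ^+ 2. Proof. by case: Hip. Qed.
Lemma ipDl x y z : ip (x + y) z = ip x z + ip y z.
Proof. by case: Hip => _ H _; have := H 1 x y z; rewrite scale1r mul1r. Qed.
Lemma ip0l z : ip 0 z = 0.
Proof. by have := ipDl 0 0 z; rewrite addr0; lra. Qed.
Lemma ipZl a x z : ip (a *: x) z = a * ip x z.
Proof. by case: Hip => _ H _; have := H a x 0 z; rewrite addr0 ip0l addr0. Qed.
Lemma ipNl x z : ip (- x) z = - ip x z.
Proof. by rewrite -scaleN1r ipZl mulN1r. Qed.
Lemma ipBl x y z : ip (x - y) z = ip x z - ip y z.
Proof. by rewrite ipDl ipNl. Qed.
Lemma ipDr x y z : ip z (x + y) = ip z x + ip z y.
Proof. by rewrite ipC ipDl !(ipC _ z). Qed.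
Lemma ipZr a x z : ip z (a *: x) = a * ip z x.
Proof. by rewrite ipC ipZl ipC. Qed.
Lemma ipNr x z : ip z (- x) = - ip z x.
Proof. by rewrite ipC ipNl ipC. Qed.
Lemma ipBr x y z : ip z (x - y) = ip z x - ip z y.
Proof. by rewrite ipDr ipNr. Qed.
Lemma ip0r z : ip z 0 = 0.
Proof. by rewrite ipC ip0l. Qed.

Lemma n2D u v : `|u + v| ^+ 2 = `|u| ^+ 2 + 2 * ip u v + `|v| ^+ 2.
Proof. rewrite -!ipN2 ipDl !ipDr (ipC v u); ring. Qed.
Lemma n2B u v : `|u - v| ^+ 2 = `|u| ^+ 2 - 2 * ip u v + `|v| ^+ 2.
Proof. rewrite n2D ipNr normrN; ring. Qed.
Lemma n2Z (a : R) (u : V) : `|a *: u| ^+ 2 = a ^+ 2 * `|u| ^+ 2.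
Proof. by rewrite normrZ exprMn real_normK ?num_real. Qed.

Lemma CS a b : ip a b <= `|a| * `|b|.
Proof.
have [->|b0] := eqVneq b 0; first by rewrite ip0r normr0 mulr0.
have [->|a0] := eqVneq a 0; first by rewrite ip0l normr0 mul0r.
have nb : 0 < `|b| by rewrite normr_gt0.
have na : 0 < `|a| by rewrite normr_gt0.
set c := `|a| / `|b|.
have c0 : 0 < c by rewrite divr_gt0.
have H := normr_ge0 (a - c *: b).
have H2 : 0 <= `|a - c *: b| ^+ 2 by rewrite exprn_ge0.
rewrite n2B n2Z ipZr in H2.
have cb : c * `|b| = `|a| by rewrite /c divfK // gt_eqF.
rewrite -(ler_pM2l c0).
have -> : c * (`|a| * `|b|) = `|a| ^+ 2 by rewrite mulrCA cb expr2.
have E : c ^+ 2 * `|b| ^+ 2 = `|a| ^+ 2 by rewrite -exprMn cb.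
rewrite E in H2; lra.
Qed.

Lemma grad_ineq (Phi : V -> R) (g : V -> V) :
  convex_real Phi -> is_gradient ip Phi g ->
  forall u v, Phi v + ip (g v) (u - v) <= Phi u.
Proof.
move=> cvx gr u v.
have [dv dd] := gr v.
have dr := @diff_derivable _ _ _ _ _ (u - v) dv.
have Dv := @deriveE _ _ _ _ _ (u - v) dv; rewrite dd in Dv.
rewrite -lerBrDl -Dv.
apply: (@cvgr_to_le _ (0:R)^'+ _ _ (fun h : R => h^-1 *: ((Phi \o shift v) (h *: (u - v)) - Phi v))).
  apply: cvg_dnbhs_at_right. exact: dr.
near=> h.
have h0 : 0 < h by near: h; exact: nbhs_right_gt.
have h1 : h < 1 by near: h; exact: nbhs_right_lt.
have hh : 0 <= h <= 1 by rewrite !ltW.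
have := cvx u v h hh.
have -> : h *: u + (1 - h) *: v = h *: (u - v) + v.
  by rewrite scalerBl scale1r scalerBr -addrA [- (h *: v) + v]addrC.
move=> H /=.
rewrite -(ler_pM2l h0) [h * (_ *: _)]mulrA mulfV ?gt_eqF // mul1r.
lra.
Unshelve. all: by end_near. Qed.

Lemma der_line (Phi : V -> R) (g : V -> V) (y d : V) (t : R) :
  is_gradient ip Phi g ->
  is_derive t 1 (fun t : R => Phi (t *: d + y)) (ip (g (t *: d + y)) d).
Proof.
move=> gr; have [dv dd] := gr (t *: d + y).
have dr := @diff_derivable _ _ _ _ _ d dv.
have Dv := @deriveE _ _ _ _ _ d dv; rewrite dd in Dv.
have E : (fun h : R => h^-1 *: (((fun t0 : R => Phi (t0 *: d + y)) \o shift t) (h *: 1)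
             - Phi (t *: d + y))) =
         (fun h : R => h^-1 *: ((Phi \o shift (t *: d + y)) (h *: d) - Phi (t *: d + y))).
  apply/funext => h /=; congr (_ *: (Phi _ - _)).
  by rewrite [_%:A]mulr1 scalerDl addrA.
apply: DeriveDef.
  by rewrite /derivable E.
by rewrite /derive E -Dv.
Qed.

Lemma descent (Phi : V -> R) (g : V -> V) (L : R) :
  is_gradient ip Phi g -> (forall u v, `|g u - g v| <= L * `|u - v|) ->
  forall y d, Phi (d + y) <= Phi y + ip (g y) d + L / 2 * `|d| ^+ 2.
Proof.
move=> gr lip y d.
set c := ip (g y) d; set q := L / 2 * `|d| ^+ 2.
set F := fun t : R => Phi (t *: d + y).
pose h : R -> R := F - c \*: (@idfun R) - q \*: ((@idfun R) ^+ 2).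
pose dh := fun t : R => ip (g (t *: d + y)) d - c - q * (2 * t).
have hd : forall t : R, is_derive t (1:R) h (dh t).
  move=> t; apply: is_derive_eq.
    apply: is_deriveB; first apply: is_deriveB.
    exact: der_line.
  rewrite /dh /GRing.scale /= !mulr1 expr1; ring.
have hc : {within `[0, 1], continuous h}.
  apply: derivable_within_continuous => t _; by case: (hd t).
have [c0 c01 E] := MVT ltr01 (fun t _ => hd t) hc.
have c0p : 0 <= c0 by move: c01; rewrite in_itv /= => /andP[/ltW].
have le : dh c0 <= 0.
  rewrite /dh /c.
  have := CS (g (c0 *: d + y) - g y) d.
  rewrite ipBl.
  have := lip (c0 *: d + y) y; rewrite addrK normrZ ger0_norm //.
  move=> H1 H2.
  have H3 : `|g (c0 *: d + y) - g y| * `|d| <= L * (c0 * `|d|) * `|d|.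
    by apply: ler_wpM2r.
  rewrite /q; move: H2 H3; rewrite expr2; lra.
have : h 1 - h 0 <= 0 by rewrite E subr0 mulr1.
have -> : h 1 - h 0 = Phi (1 *: d + y) - c * 1 - q * 1 ^+ 2 - (Phi (0 *: d + y) - c * 0 - q * 0 ^+ 2) by [].
rewrite scale1r scale0r add0r expr1n expr0n /= mulr1 !mulr0.
lra.
Qed.

Lemma prox_opt (s : R) (Psi : V -> \bar R) (w X u : V) (pX pu : R) :
  0 < s -> convex_ext Psi -> is_prox s Psi w X ->
  Psi X = pX%:E -> Psi u = pu%:E ->
  pX + ip (w - X) (u - X) / s <= pu.
Proof.
move=> s0 cvx px PX Pu.
apply/ler_addgt0Pr => e e0.
set N := `|u - X| ^+ 2.
have N0 : 0 <= N by rewrite exprn_ge0.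
set t := s * e / (s * e + N + 1).
have se : 0 < s * e by rewrite mulr_gt0.
have den : 0 < s * e + N + 1 by lra.
have t0 : 0 < t by rewrite divr_gt0.
have t1 : t < 1 by rewrite ltr_pdivrMr // mul1r; lra.
have tN : t * N <= s * e.
  rewrite /t mulrAC ler_pdivrMr //.
  have : 0 <= s * e * (e * s + 1) by rewrite mulr_ge0 // ?ltW //; nra.
  nra.
set ut := t *: u + (1 - t) *: X.
have c1 := cvx u X t (andb_true_intro (conj t0 t1)).
rewrite Pu PX -!EFinM -EFinD in c1.
have c2 := px ut; rewrite /= PX in c2.
have c3 := le_trans c2 (leeD2r _ c1).
rewrite -!EFinD lee_fin in c3.
have E : ut - w = (X - w) + t *: (u - X).
  rewrite /ut scalerBl scale1r scalerBr.
  by rewrite addrCA addrAC.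
rewrite E (n2D (X - w)) n2Z ipZr in c3.
have key : t * (pX + ip (w - X) (u - X) / s) <= t * (pu + e).
  have ipN : ip (w - X) (u - X) = - ip (X - w) (u - X).
    by rewrite -ipNl // opprB.
  rewrite ipN.
  have is2 : 0 < (2 * s)^-1 by rewrite invr_gt0; lra.
  have hs : (2 * s)^-1 * 2 = s^-1 by rewrite invfM mulrAC mulVf ?mul1r // pnatr_eq0.
  have F : (2 * s)^-1 * (t ^+ 2 * N) <= t * e.
    have -> : (2 * s)^-1 * (t ^+ 2 * N) = t * (t * N) / (2 * s).
      by rewrite expr2; field; lra.
    rewrite ler_pdivrMr; last lra.
    have : t * (t * N) <= t * (s * e) by apply: ler_wpM2l; [exact: ltW|].
    nra.
  rewrite /N in F; rewrite /s^-1 in hs.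
  rewrite -hs; move: c3 F; set a := (2 * s)^-1; set b := ip (X - w) (u - X).
  set c := `|X - w| ^+ 2; set d := `|u - X| ^+ 2. lra.
by rewrite ler_pM2l in key.
Qed.

Lemma fb_ineq (s L : R) (Psi : V -> \bar R) (Phi : V -> R) (g : V -> V)
  (y X u : V) (pX pu : R) :
  0 < s -> 0 < L -> s < L^-1 -> convex_ext Psi -> convex_real Phi ->
  is_gradient ip Phi g -> (forall u v, `|g u - g v| <= L * `|u - v|) ->
  is_prox s Psi (y - s *: g y) X -> Psi X = pX%:E -> Psi u = pu%:E ->
  pX + Phi X + ip (y - X) (u - X) / s - `|X - y| ^+ 2 / (2 * s) <= pu + Phi u.
Proof.
move=> s0 L0 sL cP cF gr lip px PX Pu.
have h1 := @prox_opt s Psi _ X u pX pu s0 cP px PX Pu.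
have ev : y - s *: g y - X = (y - X) - s *: g y by rewrite addrAC.
have h2 := @grad_ineq Phi g cF gr u y.
have h3 := @descent Phi g L gr lip y (X - y); rewrite subrK in h3.
rewrite ev ipBl ipZl in h1.
have e1 : ip (g y) (u - X) = ip (g y) (u - y) - ip (g y) (X - y).
  by rewrite -ipBr opprB addrA subrK.
rewrite e1 in h1.
have sL' : s * L < 1 by rewrite -ltr_pdivlMr // mul1r.
have q0 : 0 <= `|X - y| ^+ 2 by rewrite exprn_ge0.
have E1 : (s * (ip (g y) (u - y) - ip (g y) (X - y))) / s = ip (g y) (u - y) - ip (g y) (X - y).
  by field; lra.
have E2 : L / 2 * `|X - y| ^+ 2 <= `|X - y| ^+ 2 / (2 * s).
  rewrite ler_pdivlMr; last lra.
  nra.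
move: h1; rewrite mulrBl E1 => h1.
lra.
Qed.

Definition ipE := (ipDl, ipDr, ipNl, ipNr, ipZl, ipZr).

Lemma lyap (a s K T0 T1 Ts : R) (xm xk x1 q : V) :
  3 < a -> 0 < s -> 1 <= K -> Ts <= T0 ->
  let Y := xk + ((K - 1) / (K + a - 1)) *: (xk - xm) in
  T1 + ip (Y - x1) (xk - x1) / s - `|x1 - Y| ^+ 2 / (2 * s) <= T0 ->
  T1 + ip (Y - x1) (q - x1) / s - `|x1 - Y| ^+ 2 / (2 * s) <= Ts ->
  2 * s / (a - 1) * (K + 1 + a - 2) ^+ 2 * (T1 - Ts)
    + (a - 1) * `|x1 + (K / (a - 1)) *: (x1 - xk) - q| ^+ 2
    + 2 * s * (a - 3) / (a - 1) * K * (T0 - Ts)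
  <= 2 * s / (a - 1) * (K + a - 2) ^+ 2 * (T0 - Ts)
    + (a - 1) * `|xk + ((K - 1) / (a - 1)) *: (xk - xm) - q| ^+ 2.
Proof.
move=> a3 s0 K1 T0s Y H1 H2.
set M := 2 * s / (a - 1) * (K + a - 1) ^+ 2.
set lam := (a - 1) / (K + a - 1).
have lam0 : 0 <= lam by apply: divr_ge0; lra.
have lam1 : 0 <= 1 - lam.
  by rewrite subr_ge0 /lam ler_pdivrMr ?mul1r; lra.
have M0 : 0 <= M by rewrite /M; apply: mulr_ge0; [apply: divr_ge0|apply: exprn_ge0]; lra.
have S1 : 0 <= M * (1 - lam) * (T0 - (T1 + ip (Y - x1) (xk - x1) / s - `|x1 - Y| ^+ 2 / (2 * s))).
  by apply: mulr_ge0; [apply: mulr_ge0|lra].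
have S2 : 0 <= M * lam * (Ts - (T1 + ip (Y - x1) (q - x1) / s - `|x1 - Y| ^+ 2 / (2 * s))).
  by apply: mulr_ge0; [apply: mulr_ge0|lra].
have S3 : 0 <= 2 * s / (a - 1) * (a - 2) ^+ 2 * (T0 - Ts).
  by apply: mulr_ge0; [apply: mulr_ge0; [apply: divr_ge0|apply: exprn_ge0]|]; lra.
move: S1 S2 S3.
rewrite /M /lam /Y -!ipN2 !ipE.
rewrite ?[ip xk xm]ipC ?[ip x1 xm]ipC ?[ip q xm]ipC ?[ip x1 xk]ipC ?[ip q xk]ipC ?[ip q x1]ipC.
move=> S1 S2 S3.
have aK : K + a - 1 != 0 by apply/eqP; lra.
have a1 : a - 1 != 0 by apply/eqP; lra.
have s1 : s != 0 by apply/eqP; lra.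
rewrite -subr_ge0.
lazymatch type of S1 with is_true (Order.le _ ?A) =>
lazymatch type of S2 with is_true (Order.le _ ?B) =>
lazymatch type of S3 with is_true (Order.le _ ?C) =>
lazymatch goal with |- is_true (Order.le _ ?G) =>
  have Id : G = A + B + C by field; rewrite a1 s1 aK end end end end.
rewrite Id; apply: addr_ge0 => //; exact: addr_ge0.
Qed.
End IP.

Lemma sum_bound (R : realType) (c : R) (f Er : nat -> R) : 0 < c ->
  (forall k, 0 <= Er k.+1) ->
  (forall k, (1 <= k)%N -> Er k.+1 + c * f k <= Er k) ->
  forall n, \sum_(1 <= k < n) f k <= Er 1%N / c.
Proof.
move=> c0 E0 step.
have claim : forall n, c * \sum_(1 <= k < n.+1) f k + Er n.+1 <= Er 1%N.
  elim=> [|n IH]; first by rewrite big_geq // mulr0 add0r.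
  rewrite big_nat_recr //= mulrDr.
  have := step n.+1 isT. lra.
case=> [|n]; first by rewrite big_geq // divr_ge0 ?(E0 0%N) ?ltW.
rewrite ler_pdivlMr // mulrC.
have := claim n; have := E0 n. lra.
Qed.

Theorem fact3 (R : realType) (V : completeNormedModType R)
  (ip : V -> V -> R) (Psi : V -> \bar R) (Phi : V -> R) (gradPhi : V -> V)
  (L alpha s : R) (x : nat -> V) (xstar : V) :
  is_inner_product ip ->
  proper_fun Psi -> lower_semicontinuous Psi -> convex_ext Psi ->
  convex_real Phi -> is_gradient ip Phi gradPhi -> continuous gradPhi ->
  0 < L -> (forall u v, `|gradPhi u - gradPhi v| <= L * `|u - v|) ->
  3 < alpha -> 0 < s -> s < L^-1 ->
  (forall k : nat, (1 <= k)%N ->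
     let y := x k + ((k%:R - 1) / (k%:R + alpha - 1)) *: (x k - x k.-1) in
     is_prox s Psi (y - s *: gradPhi y) (x k.+1)) ->
  is_argmin (fun u => (Psi u + (Phi u)%:E)%E) xstar ->
  let Theta := fun u => (Psi u + (Phi u)%:E)%E in
  let z := fun k : nat => x k + ((k%:R - 1) / (alpha - 1)) *: (x k - x k.-1) in
  let E := fun k : nat =>
    ((2 * s / (alpha - 1) * (k%:R + alpha - 2) ^+ 2)%:E
       * (Theta (x k) - Theta xstar)
     + ((alpha - 1) * `|z k - xstar| ^+ 2)%:E)%E in
  (\sum_(1 <= k <oo) (k%:R%:E * (Theta (x k) - Theta xstar))
     <= ((alpha - 1) / (2 * s * (alpha - 3)))%:E * E 1%N)%E.
Proof.
move=> Hip Pp _ Pcvx Fcvx Grad _ L0 Lip a3 s0 sL Hprox Hmin.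
cbv zeta.
set Theta := fun u => (Psi u + (Phi u)%:E)%E.
set z := fun k : nat => x k + ((k%:R - 1) / (alpha - 1)) *: (x k - x k.-1).
set E := fun k : nat =>
    ((2 * s / (alpha - 1) * (k%:R + alpha - 2) ^+ 2)%:E
       * (Theta (x k) - Theta xstar)
     + ((alpha - 1) * `|z k - xstar| ^+ 2)%:E)%E.

have [Pnoinf [x0 Px0]] := Pp.
have finle : forall (p : \bar R) (r r' : R) (q : \bar R), p != -oo%E ->
    q \is a fin_num -> (p + r%:E <= q + r'%:E)%E -> p \is a fin_num.
  move=> p r r' q pn qf; rewrite fin_numE pn /=; apply: contraTN => /eqP ->.
  by rewrite addye // -(fineK qf) -EFinD leye_eq.
have Fstar : Psi xstar \is a fin_num.
  apply: (finle _ (Phi xstar) (Phi x0) (Psi x0)) => //.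
    by rewrite fin_numE Pnoinf Px0.
have Fk : forall k, (1 <= k)%N -> Psi (x k.+1) \is a fin_num.
  move=> k k1; have := Hprox k k1 xstar.
  exact: finle.
have [F1|NF1] := boolP (Psi (x 1%N) \is a fin_num); last first.
  have P1 : Psi (x 1%N) = +oo%E.
    by move: NF1; rewrite fin_numE Pnoinf /= negbK => /eqP.
  have -> : E 1%N = +oo%E.
    have Tsf : (- (Psi xstar + (Phi xstar)%:E))%E != -oo%E.
      by rewrite -(fineK Fstar) -EFinD -EFinN.
    rewrite /E /Theta P1 addye //.
    rewrite gt0_muley ?addye // lte_fin; apply: mulr_gt0; last by apply: exprn_gt0; lra.
    apply: divr_gt0; lra.
  rewrite gt0_muley ?leey // lte_fin; apply: divr_gt0; first lra.
  apply: mulr_gt0; lra.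
pose pv k := fine (Psi (x k)).
pose Ts := fine (Psi xstar) + Phi xstar.
pose th k := pv k + Phi (x k) - Ts.
have Fall : forall k, (1 <= k)%N -> Psi (x k) \is a fin_num.
  move=> [|[|m]] // _.
  exact: Fk.
have PE : forall k, (1 <= k)%N -> Psi (x k) = (pv k)%:E.
  by move=> k k1; rewrite /pv fineK // Fall.
have PS : Psi xstar = (fine (Psi xstar))%:E by rewrite fineK.
have Th : forall k, (1 <= k)%N -> (Theta (x k) - Theta xstar)%E = (th k)%:E.
  by move=> k k1; rewrite /Theta PE // PS.
have th0 : forall k, (1 <= k)%N -> 0 <= th k.
  move=> k k1; have := Hmin (x k); rewrite /= PE // PS -!EFinD lee_fin /th /Ts; lra.
pose Er k := 2 * s / (alpha - 1) * (k%:R + alpha - 2) ^+ 2 * th k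
   + (alpha - 1) * `|z k - xstar| ^+ 2.
have EE : forall k, (1 <= k)%N -> E k = (Er k)%:E.
  by move=> k k1; rewrite /E Th // -EFinM -EFinD.
pose c := 2 * s * (alpha - 3) / (alpha - 1).
have step : forall k, (1 <= k)%N -> Er k.+1 + c * (k%:R * th k) <= Er k.
  move=> k k1.
  have Hp := Hprox k k1; cbv zeta in Hp.
  set y := x k + ((k%:R - 1) / (k%:R + alpha - 1)) *: (x k - x k.-1) in Hp.
  have H1 := @fb_ineq R V ip Hip s L Psi Phi gradPhi y (x k.+1) (x k) (pv k.+1) (pv k)
     s0 L0 sL Pcvx Fcvx Grad Lip Hp (PE k.+1 isT) (PE k k1).
  have H2 := @fb_ineq R V ip Hip s L Psi Phi gradPhi y (x k.+1) xstar (pv k.+1) (fine (Psi xstar))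
     s0 L0 sL Pcvx Fcvx Grad Lip Hp (PE k.+1 isT) PS.
  have K1 : 1 <= k%:R :> R by rewrite ler1n.
  have T0s : Ts <= pv k + Phi (x k) by have := th0 k k1; rewrite /th; lra.
  have := @lyap R V ip Hip alpha s k%:R (pv k + Phi (x k)) (pv k.+1 + Phi (x k.+1)) Ts
     (x k.-1) (x k) (x k.+1) xstar a3 s0 K1 T0s H1 H2.
  have kS : k.+1%:R = k%:R + 1 :> R by rewrite natr1.
  rewrite /Er /z /th /c kS addrK /=.
  lra.
have E0 : forall k, 0 <= Er k.+1.
  move=> k; rewrite /Er; apply: addr_ge0; apply: mulr_ge0.
  - apply: mulr_ge0; [apply: divr_ge0; lra | exact: sqr_ge0].
  - exact: th0.
  - lra.
  - exact: sqr_ge0.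
have c0 : 0 < c by rewrite /c; apply: divr_gt0; [apply: mulr_gt0|]; lra.
have SB := @sum_bound R c (fun k => k%:R * th k) Er c0 E0 step.
rewrite EE // -EFinM.
apply: lime_le.
  apply: is_cvg_nneseries => n n1 _.
  by rewrite Th // -EFinM lee_fin mulr_ge0 // th0.
apply: nearW => n.
rewrite (@eq_big_nat _ _ _ 1 n _ (fun k => (k%:R * th k)%:E)); last first.
  by move=> i /andP[i1 _]; rewrite Th // -EFinM.
rewrite sumEFin lee_fin.
have -> : (alpha - 1) / (2 * s * (alpha - 3)) * Er 1%N = Er 1%N / c.
  rewrite /c; field; apply/and3P; split; apply/eqP; lra.
exact: SB.
Qed.
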